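(* Let $T$ be a primed tableau of shape $\lambda/\mu$ over $X'_k$, $1\le i\le k-1$, $j=i+1$, with $e_i(T)\ne 0$, and let $y,p$ be the boxes chosen in the definition of $e_i$. Then either $p=y$ and $e_i(T)$ is obtained from $T$ by replacing the entry $j$ in $y$ by $i$, or $p\ne y$ and $e_i(T)$ is obtained by replacing the $j$ in $y$ by $j'$ and a $j'$ in $p$ by $i$. Moreover, $e_i(T)$ is again a primed tableau of shape $\lambda/\mu$.
   Context: Primed tableaux: Fix $k$. $X'_k=\{1'<1<2'<2<\dots<k'<k\}$; moving one step along this chain is ''changing by a half unit'' (e.g. $j\to j'\to i$ are decreases by a half unit when $j=i+1$). A primed tableau of (skew) shape $\lambda/\mu$ is a filling of the diagram (English convention) with letters of $X'_k$, rows and columns weakly increasing, at most one $i'$ per row and at most one $i$ per column, for every $i$. For a position $p$, $c(p)$ is its entry; a position that is not a box of $T$ is regarded as having content smaller than every letter when it lies to the left of or above the relevant box. The reading word of $T$ is the word of its unprimed entries, read row by row left to right, from the bottom row to the top row. Bracketing: fix $i$, $j=i+1$. In the subword of the reading word consisting of the letters $i$ and $j$, repeatedly pair (bracket) a letter $j$ with a letter $i$ occurring later such that no unbracketed letters lie between them, until the unbracketed letters form a word $i^aj^b$. Operator $e_i$: if there is no unbracketed $j$, $e_i(T)=0$. Otherwise let $y$ be the box corresponding to the leftmost unbracketed $j$; $W_y$ the position immediately left of $y$, $N_y$ the position immediately above $y$. Choose a box $p$: (1) if $c(W_y)\le i$ and $c(N_y)<i$, $p=y$; (2) if $c(W_y)=j'$,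 $p=W_y$; (3) if $c(W_y)\le i$ and $c(N_y)\in\{i,j'\}$, take the maximal ribbon starting at $N_y$ and extending by steps North and/or East consisting only of boxes with entries $i$ or $j'$, and let $p$ be its Northeast-most box. Then $e_i(T)$ is obtained from $T$ by decreasing $c(y)$ by a half unit and then decreasing $c(p)$ by a half unit. *)

(* Defs.v *)
From mathcomp Require Import all_boot.
Set Implicit Arguments. Unset Strict Implicit. Unset Printing Implicit Defensive.

(* ENCODING of the alphabet X'_k = {1' < 1 < 2' < 2 < ... < k' < k}:
   the primed letter  i' is the natural number 2i-1,
   the unprimed letter i is the natural number 2i.
   Thus the order of X'_k is the order of nat, "decreasing by a half unit"
   is subtracting 1, and "smaller than every letter" is 0.
   Letters are exactly the naturals in [1, 2k]; unprimed = even. *)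
Definition unprimed (a : nat) : nat := a.*2.
Definition primed   (a : nat) : nat := a.*2.-1.

(* Positions (row, column), 0-indexed, English convention: row 0 on top. *)
Definition pos := (nat * nat)%type.

(* A filling: an assignment of a code to each position; only its values on
   the boxes of the shape are relevant. *)
Definition filling := nat -> nat -> nat.

Definition is_partition (l : seq nat) : bool := sorted geq l && (0 \notin l).

Definition in_box (lam mu : seq nat) (q : pos) : bool :=
  (nth 0 mu q.1 <= q.2) && (q.2 < nth 0 lam q.1).

Definition primed_tableau (k : nat) (lam mu : seq nat) (T : filling) : Prop :=
  [/\ is_partition lam, is_partition mu &
      (forall r, nth 0 mu r <= nth 0 lam r)] /\
  [/\
      (forall r c, in_box lam mu (r, c) -> 0 < T r c <= k.*2),
      (forall r c1 c2, in_box lam mu (r, c1) -> in_box lam mu (r, c2) ->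
          c1 <= c2 -> T r c1 <= T r c2) &
      (forall r1 r2 c, in_box lam mu (r1, c) -> in_box lam mu (r2, c) ->
          r1 <= r2 -> T r1 c <= T r2 c)] /\
  [/\
      (* at most one i' per row *)
      (forall r c1 c2, in_box lam mu (r, c1) -> in_box lam mu (r, c2) ->
          c1 < c2 -> odd (T r c1) -> T r c1 <> T r c2) &
      (* at most one i per column *)
      (forall r1 r2 c, in_box lam mu (r1, c) -> in_box lam mu (r2, c) ->
          r1 < r2 -> ~~ odd (T r1 c) -> T r1 c <> T r2 c)].

Definition reading_word (lam mu : seq nat) (T : filling) : seq (nat * pos) :=
  flatten [seq [seq (T r c, (r, c)) |
                c <- iota (nth 0 mu r) (nth 0 lam r - nth 0 mu r)
                & ~~ odd (T r c)]
          | r <- rev (iota 0 (size lam))].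

(* Bracketing (j = i+1): scanning the word left to right, each letter i is
   bracketed with the nearest preceding still-unbracketed j, if any.  The
   returned stack lists the boxes of the unbracketed letters j, the most
   recent first (so the leftmost unbracketed j is the last element). *)
Fixpoint unbracketed_j (i : nat) (w : seq (nat * pos)) (st : seq pos)
  : seq pos :=
  match w with
  | [::] => st
  | (a, b) :: w' =>
      if a == unprimed i.+1 then unbracketed_j i w' (b :: st)
      else if a == unprimed i then unbracketed_j i w' (behead st)
      else unbracketed_j i w' st
  end.

Definition content (lam mu : seq nat) (T : filling) (q : pos) : nat :=
  if in_box lam mu q then T q.1 q.2 else 0.

Definition content_W lam mu T (y : pos) : nat :=
  if y.2 is c.+1 then content lam mu T (y.1, c) else 0.
Definition content_N lam mu T (y : pos) : nat :=
  if y.1 is r.+1 then content lam mu T (r, y.2) else 0.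

Definition ribbon_box (i : nat) lam mu T (q : pos) : bool :=
  in_box lam mu q && ((T q.1 q.2 == unprimed i) || (T q.1 q.2 == primed i.+1)).

Fixpoint ribbon_end (fuel : nat) (i : nat) lam mu T (q : pos) : pos :=
  match fuel with
  | 0 => q
  | n.+1 =>
      if (0 < q.1) && ribbon_box i lam mu T (q.1.-1, q.2)
      then ribbon_end n i lam mu T (q.1.-1, q.2)
      else if ribbon_box i lam mu T (q.1, q.2.+1)
      then ribbon_end n i lam mu T (q.1, q.2.+1)
      else q
  end.

(* The boxes (y, p) chosen in the definition of e_i, or None if there is no
   unbracketed j (e_i(T) = 0). *)
Definition ei_choice (i : nat) (lam mu : seq nat) (T : filling)
  : option (pos * pos) :=
  match rev (unbracketed_j i (reading_word lam mu T) [::]) with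
  | [::] => None
  | y :: _ =>
      let cW := content_W lam mu T y in
      let cN := content_N lam mu T y in
      let W := (y.1, y.2.-1) in
      let N := (y.1.-1, y.2) in
      if (cW <= unprimed i) && (cN < unprimed i) then Some (y, y)
      else if cW == primed i.+1 then Some (y, W)
      else if (cW <= unprimed i) &&
              ((cN == unprimed i) || (cN == primed i.+1))
      then Some (y, ribbon_end (N.1 + sumn lam) i lam mu T N)
      else Some (y, y) (* unreachable for primed tableaux *)
  end.

Definition lower (T : filling) (q : pos) : filling :=
  fun r c => if (r, c) == q then (T r c).-1 else T r c.

(* e_i(T); None stands for 0. *)
Definition ei (i : nat) (lam mu : seq nat) (T : filling) : option filling :=
  match ei_choice i lam mu T with
  | None => None
  | Some (y, p) => Some (lower (lower T y) p)
  end.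

(* Main.v *)
Require Import Defs.
From mathcomp Require Import all_boot.
From mathcomp Require Import zify.
Set Implicit Arguments. Unset Strict Implicit. Unset Printing Implicit Defensive.

Lemma part_nth (l : seq nat) r1 r2 : is_partition l -> r1 <= r2 -> nth 0 l r2 <= nth 0 l r1.
Proof.
move=> /andP[hs _] hle.
case: (ltnP r2 (size l)) => h2; last by rewrite nth_default.
have := @sorted_leq_nth nat geq _ _ 0 l hs r1 r2.
apply.
- move=> a b c /= h1 h2'; exact: leq_trans h2' h1.
- move=> a /=; exact: leqnn.
- rewrite inE; lia.
- by rewrite inE.
- done.
Qed.

Lemma nth_sumn (l : seq nat) r : nth 0 l r <= sumn l.
Proof.
elim: l r => [|a l IH] r; first by rewrite nth_nil.
case: r => [|r] /=; first lia.
have := IH r; lia.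
Qed.

Section Tab.
Variables (k : nat) (lam mu : seq nat) (T : filling) (i : nat).
Hypothesis hT : primed_tableau k lam mu T.

Local Notation box q := (in_box lam mu q).

Lemma lamP : is_partition lam. Proof. by case: hT => [[]]. Qed.
Lemma muP : is_partition mu. Proof. by case: hT => [[]]. Qed.

Lemma T_range r c : box (r, c) -> 0 < T r c <= k.*2.
Proof. by case: hT => _ [[h _ _] _]; apply: h. Qed.
Lemma T_row r c1 c2 : box (r, c1) -> box (r, c2) -> c1 <= c2 -> T r c1 <= T r c2.
Proof. by case: hT => _ [[_ h _] _]; apply: h. Qed.
Lemma T_col r1 r2 c : box (r1, c) -> box (r2, c) -> r1 <= r2 -> T r1 c <= T r2 c.
Proof. by case: hT => _ [[_ _ h] _]; apply: h. Qed.
Lemma T_rowodd r c1 c2 : box (r, c1) -> box (r, c2) -> c1 < c2 -> odd (T r c1) -> T r c1 <> T r c2.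
Proof. by case: hT => _ [_ [h _]]; apply: h. Qed.
Lemma T_colev r1 r2 c : box (r1, c) -> box (r2, c) -> r1 < r2 -> ~~ odd (T r1 c) -> T r1 c <> T r2 c.
Proof. by case: hT => _ [_ [_ h]]; apply: h. Qed.

Lemma box_row r c1 c2 c : box (r, c1) -> box (r, c2) -> c1 <= c <= c2 -> box (r, c).
Proof. rewrite /in_box /=; lia. Qed.

Lemma box_up r1 r c1 c : box (r, c) -> box (r1, c1) -> r1 <= r -> c1 <= c -> box (r1, c).
Proof.
rewrite /in_box /= => /andP[h1 h2] /andP[h3 h4] hr hc.
have := part_nth lamP hr; lia.
Qed.

Lemma box_col r1 r2 r c : box (r1, c) -> box (r2, c) -> r1 <= r <= r2 -> box (r, c).
Proof.
rewrite /in_box /= => /andP[h1 h2] /andP[h3 h4] /andP[hr1 hr2].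
have := part_nth lamP hr2; have := part_nth muP hr1; lia.
Qed.

Lemma box_lt r c : box (r, c) -> c < sumn lam.
Proof. rewrite /in_box /= => /andP[_ h]; have := nth_sumn lam r; lia. Qed.

Lemma box_size r c : box (r, c) -> r < size lam.
Proof.
rewrite /in_box /= => /andP[_ h]; case: (ltnP r (size lam)) => // hs.
by rewrite nth_default in h.
Qed.


Definition seg s lo hi : seq (nat * pos) :=
  [seq (T s e, (s, e)) | e <- iota lo (hi - lo) & ~~ odd (T s e)].
Definition wrow s := seg s (nth 0 mu s) (nth 0 lam s).
Definition Uw r c := flatten [seq wrow t | t <- rev (iota r.+1 (size lam - r.+1))]
                      ++ seg r (nth 0 mu r) c.
Definition Vw r c := seg r c.+1 (nth 0 lam r) ++ flatten [seq wrow t | t <- rev (iota 0 r)].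

Definition needw (w : seq (nat * pos)) : nat :=
  foldr (fun x n => if x.1 == unprimed i.+1 then n.-1
                    else if x.1 == unprimed i then n.+1 else n) 0 w.

Lemma dropnil (A : Type) n : drop n ([::] : seq A) = [::].
Proof. by case: n. Qed.

Lemma unb_cat w1 w2 S :
  unbracketed_j i (w1 ++ w2) S = unbracketed_j i w2 (unbracketed_j i w1 S).
Proof.
elim: w1 S => [|[a b] w1 IH] S //=.
by case: ifP => _; [|case: ifP => _]; rewrite IH.
Qed.

Lemma unb_shape w S : exists L, unbracketed_j i w S = L ++ drop (needw w) S /\
  all (fun b => (unprimed i.+1, b) \in w) L.
Proof.
elim: w S => [|[a b] w IH] S /=; first by exists [::]; rewrite drop0.
case: ifP => ha.
  have [L [-> hL]] := IH (b :: S).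
  case E: (needw w) => [|n] /=.
    exists (rcons L b); rewrite drop0 -cats1 -catA; split => //.
    rewrite all_cat /= inE (eqP ha) eqxx /= andbT.
    apply/allP => x hx; rewrite inE (allP hL x hx) orbT //.
  exists L; split => //.
  apply/allP => x hx; rewrite inE (allP hL x hx) orbT //.
case: ifP => hb.
  have [L [-> hL]] := IH (behead S).
  exists L; split.
    by rewrite -drop1 drop_drop addn1.
  apply/allP => x hx; rewrite inE (allP hL x hx) orbT //.
have [L [-> hL]] := IH S.
exists L; split => //.
apply/allP => x hx; rewrite inE (allP hL x hx) orbT //.
Qed.

Lemma need_prefix v1 v2 :
  count (fun x : nat * pos => x.1 == unprimed i) v1 <=
  count (fun x : nat * pos => x.1 == unprimed i.+1) v1 + needw (v1 ++ v2).
Proof.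
elim: v1 => [|[a b] v1 IH] //=.
rewrite /unprimed in IH *.
have hd : ((i.+1).*2 == i.*2) = false by apply/negbTE; rewrite doubleS; lia.
case: eqP => [ha|ha]; case: eqP => [hb|hb]; lia.
Qed.

Lemma seg_split s lo m hi : lo <= m <= hi -> seg s lo hi = seg s lo m ++ seg s m hi.
Proof.
move=> /andP[h1 h2]; rewrite /seg.
have -> : hi - lo = (m - lo) + (hi - m) by lia.
by rewrite iotaD subnKC // filter_cat map_cat.
Qed.

Lemma seg1 s e : seg s e e.+1 = if odd (T s e) then [::] else [:: (T s e, (s, e))].
Proof. by rewrite /seg subSnn /=; case: (odd _). Qed.

Lemma seg_mem x s lo hi : x \in seg s lo hi ->
  x = (T s x.2.2, (s, x.2.2)) /\ lo <= x.2.2 < hi.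
Proof.
rewrite /seg => /mapP[e]; rewrite mem_filter mem_iota => /andP[_ he] ->.
split => //=; lia.
Qed.

Lemma rows_mem x a n : x \in flatten [seq wrow t | t <- rev (iota a n)] ->
  a <= x.2.1 < a + n /\ box x.2 /\ x.1 = T x.2.1 x.2.2.
Proof.
move=> /flattenP[w /mapP[t ht ->] hx].
have [-> hb] := seg_mem hx.
move: ht; rewrite mem_rev mem_iota /= => ht.
split; first exact: ht.
split; last by [].
by rewrite /in_box /=.
Qed.

Lemma rw_split r c : box (r, c) -> ~~ odd (T r c) ->
  reading_word lam mu T = Uw r c ++ (T r c, (r, c)) :: Vw r c.
Proof.
move=> hb hodd.
have hs := box_size hb.
have -> : reading_word lam mu T = flatten [seq wrow r | r <- rev (iota 0 (size lam))] by [].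
have -> : size lam = r + (size lam - r.+1).+1 by lia.
rewrite iotaD /= add0n rev_cat rev_cons map_cat flatten_cat -cats1 map_cat flatten_cat /=.
move: hb; rewrite /in_box /= => /andP[h1 h2].
rewrite /wrow (@seg_split r _ c) ?h1 ?(ltnW h2) // (@seg_split r c c.+1) ?h2 ?leqnSn //.
rewrite seg1 (negbTE hodd) /Uw /Vw.
by rewrite cats0 -!catA.
Qed.

Lemma Uw_pos r c x : x \in Uw r c -> (r < x.2.1) || ((x.2.1 == r) && (x.2.2 < c)).
Proof.
rewrite mem_cat => /orP[/rows_mem [h _]|/seg_mem[-> h]] /=.
  by case/andP: h => ->.
by rewrite eqxx /=; case/andP: h => _ ->; rewrite orbT.
Qed.

Lemma Vw_pos r c x : x \in Vw r c -> (x.2.1 < r) || ((x.2.1 == r) && (c < x.2.2)).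
Proof.
rewrite mem_cat => /orP[/seg_mem[-> h]|/rows_mem [h _]] /=.
  by rewrite eqxx /=; case/andP: h => -> _; rewrite orbT.
by case/andP: h => _ ->.
Qed.

Lemma rw_mem x : x \in reading_word lam mu T -> box x.2 /\ x.1 = T x.2.1 x.2.2.
Proof.
have -> : reading_word lam mu T = flatten [seq wrow r | r <- rev (iota 0 (size lam))] by [].
by move/rows_mem => [_ h].
Qed.

Lemma bracket y l : rev (unbracketed_j i (reading_word lam mu T) [::]) = y :: l ->
  [/\ box y, T y.1 y.2 = unprimed i.+1, needw (Vw y.1 y.2) = 0 &
      unbracketed_j i (Uw y.1 y.2) [::] = [::]].
Proof.
move=> E.
have hy : y \in unbracketed_j i (reading_word lam mu T) [::] by rewrite -mem_rev E inE eqxx.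
have [L [EL hL]] := unb_shape (reading_word lam mu T) [::].
move: hy; rewrite EL dropnil cats0 => hy.
have := allP hL y hy => /rw_mem [hb /= hT'].
case: y E hb hT' {hy} => r c E hb hT' /=.
have hodd : ~~ odd (T r c) by rewrite -hT' /unprimed odd_double.
move: E; rewrite (rw_split hb hodd) unb_cat /= -hT' eqxx.
have [LU [EU hLU]] := unb_shape (Uw r c) [::].
rewrite EU dropnil cats0.
have [LV [EV hLV]] := unb_shape (Vw r c) ((r, c) :: LU).
rewrite EV.
have nU : (r, c) \notin LU.
  apply/negP => /(allP hLU) /Uw_pos /=; rewrite ltnn eqxx ltnn //.
have nV : (r, c) \notin LV.
  apply/negP => /(allP hLV) /Vw_pos /=; rewrite ltnn eqxx ltnn //.
case E2: (needw (Vw r c)) => [|n] /=.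
  rewrite rev_cat rev_cons.
  case E3: (rev LU) => [|h t] /=.
    move=> _; split => //. by case: LU E3 {nU EU hLU EV} => // h t; rewrite rev_cons; case: (rev t).
  move=> [] Eh _.
  have : h \in LU by rewrite -mem_rev E3 inE eqxx.
  by rewrite Eh (negbTE nU).
move=> E4.
have : (r, c) \in LV ++ drop n LU by rewrite -mem_rev E4 inE eqxx.
rewrite mem_cat (negbTE nV) /= => /mem_drop.
by rewrite (negbTE nU).
Qed.


Definition cnt a s lo hi := count (fun e => T s e == a) (iota lo (hi - lo)).

Lemma count_seg a s lo hi : ~~ odd a ->
  count (fun x : nat * pos => x.1 == a) (seg s lo hi) = cnt a s lo hi.
Proof.
move=> ha; rewrite /seg count_map count_filter /cnt; apply: eq_count => e /=.
by case: eqP => //= ->; rewrite ha.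
Qed.

Lemma cnt_split a s lo m hi : lo <= m <= hi -> cnt a s lo hi = cnt a s lo m + cnt a s m hi.
Proof.
move=> /andP[h1 h2]; rewrite /cnt.
have -> : hi - lo = (m - lo) + (hi - m) by lia.
by rewrite iotaD subnKC // count_cat.
Qed.

Lemma cnt1 a s e : cnt a s e e.+1 = (T s e == a).
Proof. by rewrite /cnt subSnn /= addn0. Qed.

Lemma cnt_zero a s lo hi : (forall e, lo <= e < hi -> T s e != a) -> cnt a s lo hi = 0.
Proof.
move=> H; apply/eqP; rewrite eqn0Ngt -has_count; apply/hasPn => e.
rewrite mem_iota => h; apply: H; lia.
Qed.

Lemma cnt_step a s lo hi : cnt a s lo hi <= 1 + cnt a s lo.+1 hi.
Proof.
case: (ltnP lo hi) => h.
  rewrite (@cnt_split a s lo lo.+1 hi) ?leqnSn ?h // cnt1; case: (_ == _); lia.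
by rewrite /cnt (_ : hi - lo = 0) //; lia.
Qed.

Lemma cnt_ge a s lo m hi : lo <= m < hi -> (T s m == a) <= cnt a s lo hi.
Proof.
move=> /andP[h1 h2].
rewrite (@cnt_split a s lo m hi) ?h1 ?(ltnW h2) // (@cnt_split a s m m.+1 hi) ?leqnSn ?h2 //.
rewrite cnt1; lia.
Qed.

Variables r c : nat.
Hypothesis hneed : needw (Vw r c) = 0.

Definition pref s d := seg r c.+1 (nth 0 lam r) ++
   flatten [seq wrow t | t <- rev (iota s.+1 (r - s.+1))] ++ seg s (nth 0 mu s) d.+1.
Definition C a s d := count (fun x : nat * pos => x.1 == a) (pref s d).

Lemma A_ineq s d : s < r -> box (s, d) -> C (unprimed i) s d <= C (unprimed i.+1) s d.
Proof.
move=> hs hb.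
suff [v2 E] : exists v2, Vw r c = pref s d ++ v2.
  have := need_prefix (pref s d) v2; rewrite -E hneed addn0; exact.
move: hb; rewrite /in_box /= => /andP[h1 h2].
rewrite /Vw /pref.
have -> : r = s + (r - s.+1).+1 by lia.
rewrite iotaD /= add0n rev_cat rev_cons -cats1 map_cat flatten_cat map_cat flatten_cat /=.
rewrite /wrow (@seg_split s _ d.+1) ?h1 ?h2 //; last lia.
have -> : s + (r - s.+1).+1 - s.+1 = r - s.+1 by lia.
eexists; rewrite -!catA; reflexivity.
Qed.

Lemma C_east a s d : ~~ odd a -> box (s, d.+1) -> C a s d.+1 = C a s d + (T s d.+1 == a).
Proof.
move=> ha; rewrite /in_box /= => /andP[h1 h2].
rewrite /C /pref (@seg_split s _ d.+1 d.+2) ?h1 ?leqnSn // !count_cat !count_seg // (cnt1 a s d.+1).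
lia.
Qed.

Lemma C_north a s d : ~~ odd a -> s.+1 < r -> box (s.+1, d) -> box (s, d) ->
  C a s d = C a s.+1 d + cnt a s.+1 d.+1 (nth 0 lam s.+1) + cnt a s (nth 0 mu s) d.+1.
Proof.
move=> ha hs; rewrite /in_box /= => /andP[h1 h2] /andP[h3 h4].
rewrite /C /pref.
have -> : r - s.+1 = (r - s.+2).+1 by lia.
rewrite /= rev_cons -cats1 map_cat flatten_cat /= cats0.
rewrite /wrow (@seg_split s.+1 _ d.+1) ?h1 ?h2 //; last lia.
rewrite !count_cat !count_seg //; lia.
Qed.

Lemma C_base a s d : ~~ odd a -> s.+1 = r ->
  C a s d = cnt a r c.+1 (nth 0 lam r) + cnt a s (nth 0 mu s) d.+1.
Proof.
move=> ha hs; rewrite /C /pref -hs subnn /= !count_cat !count_seg // hs //.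
Qed.

Definition Rc s d := cnt (unprimed i.+1) s.+1 d.+1 (nth 0 lam s.+1).

Lemma rbE q : ribbon_box i lam mu T q =
  box q && ((T q.1 q.2 == i.*2) || (T q.1 q.2 == i.*2.+1)).
Proof. by rewrite /ribbon_box /unprimed /primed doubleS. Qed.

Lemma oddS1 n : odd (n.*2.+1).
Proof. by rewrite -addn1 oddD odd_double. Qed.

Lemma R0 s d : box (s, d) -> T s d = i.*2.+1 -> Rc s d = 0.
Proof.
move=> hb ht; apply: cnt_zero => e he; apply/negP => /eqP he2.
rewrite /unprimed doubleS in he2.
have hb1 : box (s.+1, e).
  move: hb; rewrite /in_box /= => /andP[h1 h2].
  have := part_nth muP (leqnSn s); lia.
have hb2 : box (s, e) by apply: (box_up hb1 hb) => //; lia.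
have := T_row hb hb2 (ltnW (proj1 (andP he))).
have := T_col hb2 hb1 (leqnSn s).
have n1 : T s d <> T s e by apply: T_rowodd => //; [case/andP: he | rewrite ht oddS1].
case: (eqVneq (T s e) i.*2.+2) => n2.
  have := @T_colev s s.+1 e hb2 hb1 (ltnSn s); rewrite n2 he2 => H.
  by move=> _ _; apply: H => //; rewrite -addn2 oddD odd_double.
move/eqP: n2 => n2; rewrite ht he2 in n1 *; lia.
Qed.

Lemma R2 s d : box (s, d) -> T s d = i.*2 -> ~~ ribbon_box i lam mu T (s, d.+1) -> Rc s d = 0.
Proof.
move=> hb ht hnr; apply: cnt_zero => e he; apply/negP => /eqP he2.
rewrite /unprimed doubleS in he2.
have hb1 : box (s.+1, e).
  move: hb; rewrite /in_box /= => /andP[h1 h2].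
  have := part_nth muP (leqnSn s); lia.
have hb2 : box (s, e) by apply: (box_up hb1 hb) => //; lia.
have hde : d < e by case/andP: he.
have h1 := T_row hb hb2 (ltnW hde).
have h2 := T_col hb2 hb1 (leqnSn s).
have n2 : T s e != i.*2.+2.
  apply/eqP => n2; have := @T_colev s s.+1 e hb2 hb1 (ltnSn s); rewrite n2 he2 => H.
  by apply: H => //; rewrite -addn2 oddD odd_double.
have hb3 : box (s, d.+1) by apply: (box_row hb hb2); lia.
have h3 := T_row hb hb3 (leqnSn d).
have h4 := T_row hb3 hb2 hde.
move: hnr; rewrite rbE hb3 /=.
move/eqP: n2 => n2; rewrite ht he2 in h1 h2 h3 h4 *.
case: eqP => [//|n3]; case: eqP => [//|n4] _; lia.
Qed.

Definition Inv kk (q : pos) := C (unprimed i.+1) q.1 q.2 + (T q.1 q.2 == unprimed i) + kk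
   <= C (unprimed i) q.1 q.2 + Rc q.1 q.2.

Lemma ev_unp n : ~~ odd (unprimed n). Proof. by rewrite /unprimed odd_double. Qed.

Lemma ribbon_ok kk fuel q : box q -> q.1 < r ->
  (T q.1 q.2 == i.*2) || (T q.1 q.2 == i.*2.+1) -> Inv kk q ->
  q.1 + (sumn lam - q.2) <= fuel ->
  forall p, p = ribbon_end fuel i lam mu T q ->
  [/\ box p, p.1 < r, (T p.1 p.2 == i.*2) || (T p.1 p.2 == i.*2.+1), Inv kk p &
      ~~ ((0 < p.1) && ribbon_box i lam mu T (p.1.-1, p.2)) &&
      ~~ ribbon_box i lam mu T (p.1, p.2.+1)].
Proof.
elim: fuel q => [|n IH] [s d] /= hb hs hv hinv hf p.
  have := box_lt hb; lia.
rewrite /=.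
case: ifP => hN Ep.
  case: s hN hb hs hv hinv hf Ep => [|s] //= hN hb hs hv hinv hf Ep.
  have hb' : box (s, d) by move: hN; rewrite rbE => /andP[].
  have hv' : (T s d == i.*2) || (T s d == i.*2.+1) by move: hN; rewrite rbE => /andP[].
  have hcol := T_col hb' hb (leqnSn s).
  have ht : T s.+1 d = i.*2.+1.
    case/orP: hv => /eqP // ht; exfalso.
    case/orP: hv' => /eqP ht'.
      have := @T_colev s s.+1 d hb' hb (ltnSn s); rewrite ht ht' => H.
      by apply: H => //; rewrite odd_double.
    by rewrite ht ht' in hcol; lia.
  apply: (IH (s, d) _ _ _ _ _ p Ep) => //=; first lia.
    rewrite /Inv /= (@C_north _ s d (ev_unp _) hs hb hb') (@C_north (unprimed i) s d (ev_unp _) hs hb hb').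
    have -> : cnt (unprimed i.+1) s (nth 0 mu s) d.+1 = 0.
      apply: cnt_zero => e he; apply/eqP => he2.
      have hbe : box (s, e) by move: hb'; rewrite /in_box /= => /andP[? ?]; apply/andP; split; lia.
      have hed : e <= d by case/andP: he.
      have := T_row hbe hb' hed; rewrite he2 /unprimed doubleS.
      case/orP: hv' => /eqP ->; lia.
    have := @cnt_ge (unprimed i) s (nth 0 mu s) d d.+1.
    move: hinv; rewrite /Inv /= (R0 hb ht) ht /unprimed.
    have -> : (i.*2.+1 == i.*2) = false by lia.
    rewrite /Rc.
    move: hb'; rewrite /in_box /= => /andP[h1 h2] hinv H; have := H (_ : _ && _); rewrite h1 ltnSn; move=> /(_ isT).
    rewrite /unprimed; lia.
move: Ep; case: ifP => hE Ep.
  have hb' : box (s, d.+1) by move: hE; rewrite rbE => /andP[].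
  have hv' : (T s d.+1 == i.*2) || (T s d.+1 == i.*2.+1) by move: hE; rewrite rbE => /andP[].
  have hrow := T_row hb hb' (leqnSn d).
  have ht : T s d = i.*2.
    case/orP: hv => /eqP // ht; exfalso.
    have := @T_rowodd s d d.+1 hb hb' (ltnSn d); rewrite ht oddS1 => H.
    case/orP: hv' => /eqP ht'; rewrite ht ht' in hrow H; [lia | exact: H].
  apply: (IH (s, d.+1) _ _ _ _ _ p Ep) => //=.
    rewrite /Inv /= !C_east ?ev_unp //.
    have := @cnt_step (unprimed i.+1) s.+1 d.+1 (nth 0 lam s.+1).
    move: hinv; rewrite /Inv /= ht /Rc eqxx.
    have -> : (T s d.+1 == unprimed i.+1) = false.
      by case/orP: hv' => /eqP ->; rewrite /unprimed doubleS; lia.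
    case: (T s d.+1 == unprimed i); lia.
  have := box_lt hb'; lia.
by rewrite Ep hN hE.
Qed.

Lemma ribbon_final kk p : box p -> p.1 < r ->
  (T p.1 p.2 == i.*2) || (T p.1 p.2 == i.*2.+1) -> Inv kk p ->
  ~~ ribbon_box i lam mu T (p.1, p.2.+1) -> kk = 0 /\ T p.1 p.2 = i.*2.+1.
Proof.
case: p => s d /= hb hs hv hinv hE.
have hA := A_ineq hs hb.
case/orP: hv => /eqP ht.
  have := R2 hb ht hE; move: hinv; rewrite /Inv /= ht /unprimed eqxx => hinv hR.
  move: hA hinv; rewrite /unprimed hR; lia.
have := R0 hb ht; move: hinv; rewrite /Inv /= ht /unprimed => hinv hR.
split => //.
move: hA hinv; rewrite /unprimed hR; case: (_ == _); lia.
Qed.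

Lemma ribbon_base kk s : s.+1 = r -> box (s, c) ->
  (T s c == i.*2) || (T s c == i.*2.+1) ->
  (kk = 0 \/ [/\ kk = 1, 0 < c, box (s, c.-1) & T s c.-1 = i.*2]) -> Inv kk (s, c).
Proof.
move=> hs hb hv hk.
rewrite /Inv /= !C_base ?ev_unp // /Rc hs.
have -> : cnt (unprimed i.+1) s (nth 0 mu s) c.+1 = 0.
  apply: cnt_zero => e he; apply/eqP => he2.
  have hbe : box (s, e) by move: hb; rewrite /in_box /= => /andP[? ?]; apply/andP; split; lia.
  have hed : e <= c by case/andP: he.
  have := T_row hbe hb hed; rewrite he2 /unprimed doubleS.
  case/orP: hv => /eqP ->; lia.
suff : (T s c == unprimed i) + kk <= cnt (unprimed i) s (nth 0 mu s) c.+1 by lia.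
move: hb; rewrite /in_box /= => /andP[h1 h2].
case: hk => [->|[-> hc hb' ht']].
  rewrite addn0; apply: cnt_ge; lia.
move: hb'; rewrite /in_box /= => /andP[h3 h4].
rewrite (@cnt_split _ s _ c c.+1) ?h1 ?leqnSn // cnt1.
have := @cnt_ge (unprimed i) s (nth 0 mu s) c.-1 c.
rewrite ht' /unprimed eqxx => H.
have : 1 <= cnt i.*2 s (nth 0 mu s) c by apply: H; lia.
case: (_ == _); lia.
Qed.

End Tab.

Lemma tab_build k lam mu F :
  [/\ is_partition lam, is_partition mu & (forall r, nth 0 mu r <= nth 0 lam r)] ->
  (forall r c, in_box lam mu (r, c) -> 0 < F r c <= k.*2) ->
  (forall r c1 c2, in_box lam mu (r, c1) -> in_box lam mu (r, c2) -> c1 < c2 ->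
     F r c1 <= F r c2 /\ (odd (F r c1) -> F r c1 <> F r c2)) ->
  (forall r1 r2 c, in_box lam mu (r1, c) -> in_box lam mu (r2, c) -> r1 < r2 ->
     F r1 c <= F r2 c /\ (~~ odd (F r1 c) -> F r1 c <> F r2 c)) ->
  primed_tableau k lam mu F.
Proof.
move=> hs hr hrow hcol; split => //; split; split => //.
- move=> r c1 c2 h1 h2; rewrite leq_eqVlt => /orP[/eqP -> //|h].
  by case: (hrow r c1 c2 h1 h2 h).
- move=> r1 r2 c h1 h2; rewrite leq_eqVlt => /orP[/eqP -> //|h].
  by case: (hcol r1 r2 c h1 h2 h).
- by move=> r c1 c2 h1 h2 h; case: (hrow r c1 c2 h1 h2 h).
- by move=> r1 r2 c h1 h2 h; case: (hcol r1 r2 c h1 h2 h).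
Qed.

Section Tab2.
Variables (k : nat) (lam mu : seq nat) (T : filling) (i : nat).
Hypothesis hT : primed_tableau k lam mu T.
Hypothesis hi1 : 1 <= i.
Local Notation box q := (in_box lam mu q).

Lemma shapeT : [/\ is_partition lam, is_partition mu & (forall r, nth 0 mu r <= nth 0 lam r)].
Proof. by case: hT. Qed.

Lemma oddd n : odd (n.*2) = false. Proof. by rewrite odd_double. Qed.
Lemma oddd1 n : odd (n.*2.+1) = true. Proof. by rewrite -addn1 oddD odd_double. Qed.
Lemma oddd2 n : odd (n.*2.+2) = false. Proof. by rewrite -addn2 oddD odd_double. Qed.

Lemma case1_tab r c F : box (r, c) -> T r c = i.*2.+2 ->
  (forall c', c' < c -> box (r, c') -> T r c' <= i.*2) ->
  (forall r', r' < r -> box (r', c) -> T r' c < i.*2) ->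
  (forall a b, F a b = if (a, b) == (r, c) then i.*2 else T a b) ->
  primed_tableau k lam mu F.
Proof.
move=> hb hy hL hU hF; apply: tab_build; first exact: shapeT.
- move=> a b hab; rewrite hF; case: eqP => [_|_]; last by apply: (@T_range k lam mu T hT a b hab).
  have := T_range hT hb; rewrite hy; lia.
- move=> a c1 c2 h1 h2 hc; rewrite !hF.
  case: (eqVneq (a, c1) (r, c)) => [[ea ec]|n1].
    subst a c1.
    case: (eqVneq (r, c2) (r, c)) => [[e]|n2]; first lia.
    have := T_row hT hb h2 (ltnW hc); rewrite hy oddd; split => //; lia.
  case: (eqVneq (a, c2) (r, c)) => [[ea ec]|n2].
    subst a c2; have h := hL _ hc h1; split => // ho e; by rewrite e oddd in ho.
  split; first exact: (T_row hT h1 h2 (ltnW hc)). exact: (T_rowodd hT h1 h2 hc).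
- move=> a1 a2 b h1 h2 ha; rewrite !hF.
  case: (eqVneq (a1, b) (r, c)) => [[ea ec]|n1].
    subst a1 b.
    case: (eqVneq (a2, c) (r, c)) => [[e]|n2]; first lia.
    have := T_col hT hb h2 (ltnW ha); rewrite hy; split; lia.
  case: (eqVneq (a2, b) (r, c)) => [[ea ec]|n2].
    subst a2 b; have := hU _ ha h1; split; lia.
  split; first exact: (T_col hT h1 h2 (ltnW ha)). exact: (T_colev hT h1 h2 ha).
Qed.

Lemma case2_tab r c pr pc F : box (r, c) -> T r c = i.*2.+2 ->
  box (pr, pc) -> T pr pc = i.*2.+1 -> (pr, pc) <> (r, c) ->
  (forall c', c' < c -> box (r, c') -> (r, c') <> (pr, pc) -> T r c' <= i.*2) ->
  (forall r', r' < pr -> box (r', pc) -> T r' pc < i.*2) ->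
  (pr = r -> pc < c) -> (pc = c -> pr < r) ->
  (forall a b, F a b = if (a, b) == (r, c) then i.*2.+1
                       else if (a, b) == (pr, pc) then i.*2 else T a b) ->
  primed_tableau k lam mu F.
Proof.
move=> hb hy hbp hp hne hL hU hpos1 hpos2 hF.
have yR : forall c', c < c' -> box (r, c') -> i.*2.+2 <= T r c'.
  by move=> c' hc hb'; rewrite -hy; apply: (T_row hT hb hb' (ltnW hc)).
have yD : forall r', r < r' -> box (r', c) -> i.*2.+2 <= T r' c.
  by move=> r' hc hb'; rewrite -hy; apply: (T_col hT hb hb' (ltnW hc)).
have yU : forall r', r' < r -> box (r', c) -> T r' c <= i.*2.+1.
  move=> r' hc hb'; have := T_col hT hb' hb (ltnW hc); rewrite hy.
  case: (eqVneq (T r' c) i.*2.+2) => [e|n]; last by move/eqP: n; lia.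
  have := T_colev hT hb' hb hc; rewrite e hy oddd2 => H; by case: (H isT).
have pL : forall c', c' < pc -> box (pr, c') -> T pr c' <= i.*2.
  move=> c' hc hb'; have := T_row hT hb' hbp (ltnW hc); rewrite hp.
  case: (eqVneq (T pr c') i.*2.+1) => [e|n]; last by move/eqP: n; lia.
  have := T_rowodd hT hb' hbp hc; rewrite e hp oddd1 => H; by case: (H isT).
have pR : forall c', pc < c' -> box (pr, c') -> i.*2.+1 <= T pr c'.
  by move=> c' hc hb'; rewrite -hp; apply: (T_row hT hbp hb' (ltnW hc)).
have pD : forall r', pr < r' -> box (r', pc) -> i.*2.+1 <= T r' pc.
  by move=> r' hc hb'; rewrite -hp; apply: (T_col hT hbp hb' (ltnW hc)).
apply: tab_build; first exact: shapeT.
- move=> a b hab; rewrite hF; have := T_range hT hb; rewrite hy => hr.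
  case: eqP => [_|_]; first lia.
  case: eqP => [_|_]; first lia.
  exact: (T_range hT hab).
- move=> a c1 c2 h1 h2 hc; rewrite !hF.
  case: (eqVneq (a, c1) (r, c)) => [[ea ec]|n1].
    subst a c1.
    case: (eqVneq (r, c2) (r, c)) => [[e]|n2]; first lia.
    case: (eqVneq (r, c2) (pr, pc)) => [[e1 e2]|n3].
      by have := hpos1 (esym e1); lia.
    have := yR _ hc h2; rewrite oddd1; split => //; lia.
  case: (eqVneq (a, c1) (pr, pc)) => [[ea ec]|n1'].
    subst a c1.
    case: (eqVneq (pr, c2) (r, c)) => [[e1 e2]|n2].
      by rewrite oddd; split => //; lia.
    case: (eqVneq (pr, c2) (pr, pc)) => [[e]|n3]; first lia.
    have := pR _ hc h2; rewrite oddd; split => //; lia.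
  case: (eqVneq (a, c2) (r, c)) => [[ea ec]|n2].
    subst a c2.
    have n4 : (r, c1) <> (pr, pc) by apply/eqP.
    have h := hL _ hc h1 n4.
    split; first lia. move=> _; lia.
  case: (eqVneq (a, c2) (pr, pc)) => [[ea ec]|n3].
    subst a c2.
    have h := pL _ hc h1.
    split => // ho e; by rewrite e oddd in ho.
  split; first exact: (T_row hT h1 h2 (ltnW hc)). exact: (T_rowodd hT h1 h2 hc).
- move=> a1 a2 b h1 h2 ha; rewrite !hF.
  case: (eqVneq (a1, b) (r, c)) => [[ea ec]|n1].
    subst a1 b.
    case: (eqVneq (a2, c) (r, c)) => [[e]|n2]; first lia.
    case: (eqVneq (a2, c) (pr, pc)) => [[e1 e2]|n3].
      by have := hpos2 (esym e2); lia.
    have := yD _ ha h2; rewrite oddd1; split => //; lia.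
  case: (eqVneq (a1, b) (pr, pc)) => [[ea ec]|n1'].
    subst a1 b.
    case: (eqVneq (a2, pc) (r, c)) => [[e1 e2]|n2].
      by split => //; lia.
    case: (eqVneq (a2, pc) (pr, pc)) => [[e]|n3]; first lia.
    have := pD _ ha h2; split => //; lia.
  case: (eqVneq (a2, b) (r, c)) => [[ea ec]|n2].
    subst a2 b.
    have h := yU _ ha h1.
    split; first lia. move=> ho e; by rewrite e oddd1 in ho.
  case: (eqVneq (a2, b) (pr, pc)) => [[ea ec]|n3].
    subst a2 b.
    have h := hU _ ha h1.
    split; lia.
  split; first exact: (T_col hT h1 h2 (ltnW ha)). exact: (T_colev hT h1 h2 ha).
Qed.

End Tab2.


Lemma lower2 (T : filling) (y p : pos) a b : lower (lower T y) p a b =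
  if (a, b) == p then (if (a, b) == y then (T a b).-1 else T a b).-1
  else if (a, b) == y then (T a b).-1 else T a b.
Proof. by []. Qed.

Theorem lemma3p3 (k : nat) (lam mu : seq nat) (T : filling) (i : nat)
  (hT : primed_tableau k lam mu T) (hi1 : 1 <= i) (hik : i <= k - 1)
  (hne : ei i lam mu T <> None) (y p : pos)
  (hyp : ei_choice i lam mu T = Some (y, p)) :
  exists T' : filling,
    ei i lam mu T = Some T' /\
    ((p = y /\ T y.1 y.2 = unprimed i.+1 /\
      (forall r c, T' r c = if (r, c) == y then unprimed i else T r c))
     \/
     (p <> y /\ in_box lam mu p /\ T y.1 y.2 = unprimed i.+1 /\ T p.1 p.2 = primed i.+1 /\
      (forall r c, T' r c = if (r, c) == y then primed i.+1
                            else if (r, c) == p then unprimed i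
                            else T r c))) /\
    primed_tableau k lam mu T'.
Proof.
exists (lower (lower T y) p).
have -> : ei i lam mu T = Some (lower (lower T y) p) by rewrite /ei hyp.
move: hyp; rewrite /ei_choice.
case E: (rev (unbracketed_j i (reading_word lam mu T) [::])) => [|y0 l] //.
have [hby hTy hneed hU] := bracket E.
case: y0 E hby hTy hneed hU => r c E hby hTy hneed hU /=.
have hTy' : T r c = i.*2.+2 by rewrite hTy /unprimed doubleS.
rewrite /primed /unprimed doubleS /=.
have cWb : content_W lam mu T (r, c) <= i.*2.+2.
  rewrite /content_W /=; destruct c as [|c0]; first by [].
  rewrite /content; case: ifP => // hb0; rewrite -hTy'. 
  exact: (T_row hT hb0 hby (leqnSn c0)).
have cWL : forall c', c' < c -> in_box lam mu (r, c') -> T r c' <= content_W lam mu T (r, c).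
  move=> c' hc hb'; destruct c as [|c0]; first by [].
  have hb0 : in_box lam mu (r, c0) by apply: (box_row hb' hby); lia.
  rewrite /content_W /content /= hb0; apply: (T_row hT hb' hb0); lia.
have cNb : content_N lam mu T (r, c) <= i.*2.+1.
  rewrite /content_N /=; destruct r as [|r0]; first by [].
  rewrite /content /=; case: ifP => // hb0.
  have := T_col hT hb0 hby (leqnSn r0); rewrite hTy'.
  case: (eqVneq (T r0 c) i.*2.+2) => [e|n]; last by move/eqP: n => /=; lia.
  have := T_colev hT hb0 hby (ltnSn r0); rewrite e hTy' oddd2 => H; by case: (H isT).
have cNU : forall r', r' < r -> in_box lam mu (r', c) -> T r' c <= content_N lam mu T (r, c).
  move=> r' hr hb'; destruct r as [|r0]; first by [].
  have hb0 : in_box lam mu (r0, c) by apply: (box_col hT hb' hby); lia.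
  rewrite /content_N /content /= hb0; apply: (T_col hT hb' hb0); lia.

have h0 : 0 < i.*2 by lia.
case: ifP => [h1 [<- <-]|h1].
  have hF : forall a b, lower (lower T (r, c)) (r, c) a b = if (a, b) == (r, c) then i.*2 else T a b.
    move=> a b; rewrite lower2; case: eqP => [[-> ->]|] //=; rewrite hTy' //.
  split => //; split; first by left; split => //; split.
  apply: (case1_tab hT hi1 hby hTy') => //.
    move=> c' hc hb'; have := cWL _ hc hb'; move: h1 => /andP[h1 _]; lia.
  move=> r' hr hb'; have := cNU _ hr hb'; move: h1 => /andP[_ h1]; lia.
case: ifP => [h2 [<- <-]|h2].
  destruct c as [|c0]; first by move: h2; rewrite /content_W.
  move: h2; rewrite /content_W /content /=; case: ifP => [hbp /eqP hTp|]; last by [].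
  have hpy : (r, c0) <> (r, c0.+1) by move=> [] /eqP; lia.
  have hF : forall a b, lower (lower T (r, c0.+1)) (r, c0) a b =
     if (a, b) == (r, c0.+1) then i.*2.+1 else if (a, b) == (r, c0) then i.*2 else T a b.
    move=> a b; rewrite lower2; case: eqP => [[-> ->]|na].
      by rewrite (_ : ((r, c0) == (r, c0.+1)) = false) ?hTp //; apply/eqP.
    by case: eqP => [[-> ->]|//]; rewrite hTy'.
  split => //; split; first by right; split => //; split => //; split => //; split.
  apply: (case2_tab hT hi1 hby hTy' hbp hTp hpy) => //.
  - move=> c' hc hb' hn.
    have hc' : c' < c0 by case: (ltngtP c' c0) => // e; [lia | by rewrite e in hn].
    have := T_row hT hb' hbp (ltnW hc'); rewrite hTp.
    case: (eqVneq (T r c') i.*2.+1) => [e|n]; last by move/eqP: n; lia.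
    have := T_rowodd hT hb' hbp hc'; rewrite e hTp oddd1 => H; by case: (H isT).
  - move=> r' hr hb'.
    destruct r as [|r0]; first by [].
    have hb0 : in_box lam mu (r0, c0) by apply: (box_col hT hb' hbp); lia.
    have t1 : T r' c0 <= T r0 c0 by apply: (T_col hT hb' hb0); lia.
    have hbN : in_box lam mu (r0, c0.+1) by apply: (box_up hT hby hb0); lia.
    have t2 := T_col hT hb0 hbp (leqnSn r0); rewrite hTp in t2.
    have t3 := T_row hT hb0 hbN (leqnSn c0).
    have t4 := T_col hT hbN hby (leqnSn r0); rewrite hTy' in t4.
    have t5 : T r0 c0.+1 <> i.*2.+2.
      move=> e; have := T_colev hT hbN hby (ltnSn r0); rewrite e hTy' oddd2 => H; by case: (H isT).
    case: (ltngtP (T r0 c0) i.*2) => t6; first lia.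
      have e : T r0 c0 = i.*2.+1 by lia.
      have e' : T r0 c0.+1 = i.*2.+1 by lia.
      have := T_rowodd hT hb0 hbN (ltnSn c0); rewrite e e' oddd1 => H; by case: (H isT).
    exfalso.
    have hv : (T r0 c0.+1 == i.*2) || (T r0 c0.+1 == i.*2.+1).
      apply/orP; case: (ltngtP (T r0 c0.+1) i.*2) => e; [lia | right; apply/eqP; lia | left; apply/eqP; lia].
    have hinv := ribbon_base hT hneed (kk := 1) (s := r0) erefl hbN hv (or_intror (And4 erefl isT hb0 t6)).
    have hfuel : r0 + (sumn lam - c0.+1) <= r0 + sumn lam by lia.
    have [hbp' hlt hvp hinvp hend] := ribbon_ok hT hneed hbN (ltnSn r0) hv hinv hfuel erefl.
    by have [] := ribbon_final hT hneed hbp' hlt hvp hinvp (proj2 (andP hend)).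
  - move=> e; lia.

case: ifP => [h3 [<- <-]|h3].
  destruct r as [|r0].
    exfalso; rewrite /content_N /= in h3.
    by case/andP: h3 => _ /orP[/eqP|/eqP]; lia.
  have hbN : in_box lam mu (r0, c).
    apply/negPn/negP => hn; rewrite /content_N /content /= (negbTE hn) in h3.
    by case/andP: h3 => _ /orP[/eqP|/eqP]; lia.
  rewrite /content_N /content /= hbN in h3.
  case/andP: h3 => hW hv.
  have hinv := ribbon_base hT hneed (kk := 0) (s := r0) erefl hbN hv (or_introl erefl).
  have hfuel : r0 + (sumn lam - c) <= r0 + sumn lam by lia.
  have [hbp hlt hvp hinvp hend] := ribbon_ok hT hneed hbN (ltnSn r0) hv hinv hfuel erefl.
  have [_ hTp] := ribbon_final hT hneed hbp hlt hvp hinvp (proj2 (andP hend)).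
  move: (ribbon_end (r0 + sumn lam) i lam mu T (r0, c)) hbp hlt hvp hinvp hend hTp.
  move=> [pr pc] /= hbp hlt _ _ hend hTp.
  have hpy : (pr, pc) <> (r0.+1, c) by move=> [e _]; lia.
  have hF : forall a b, lower (lower T (r0.+1, c)) (pr, pc) a b =
     if (a, b) == (r0.+1, c) then i.*2.+1 else if (a, b) == (pr, pc) then i.*2 else T a b.
    move=> a b; rewrite lower2; case: eqP => [[-> ->]|na].
      by rewrite (_ : ((pr, pc) == (r0.+1, c)) = false) ?hTp //; apply/eqP.
    by case: eqP => [[-> ->]|//]; rewrite hTy'.
  split => //; split; first by right; split => //; split => //; split => //; split.
  apply: (case2_tab hT hi1 hby hTy' hbp hTp hpy) => //.
  - move=> c' hc hb' _; have := cWL _ hc hb'; lia.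
  - move=> r' hr hb'.
    destruct pr as [|pr0]; first by [].
    have hb0 : in_box lam mu (pr0, pc) by apply: (box_col hT hb' hbp); lia.
    have t1 : T r' pc <= T pr0 pc by apply: (T_col hT hb' hb0); lia.
    have t2 := T_col hT hb0 hbp (leqnSn pr0); rewrite hTp in t2.
    move: hend => /andP[/= hn _]; move: hn; rewrite rbE /= hb0 /=.
    case: eqP => // n1; case: eqP => // n2 _; lia.
  - move=> e; lia.
move=> _; exfalso.
case: (leqP (content_W lam mu T (r, c)) i.*2) => hW.
  move: h1 h3; rewrite hW /= => h1 h3.
  case: (eqVneq (content_N lam mu T (r, c)) i.*2) => e1; first by rewrite e1 eqxx in h3.
  case: (eqVneq (content_N lam mu T (r, c)) i.*2.+1) => e2; first by rewrite e2 eqxx orbT in h3.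
  move/negbT: h1; rewrite -leqNgt => h1.
  move/eqP: e1 => e1; move/eqP: e2 => e2; lia.
have eW : content_W lam mu T (r, c) = i.*2.+2.
  move/negbT: h2 => /eqP h2; lia.
destruct c as [|c0]; first by move: eW; rewrite /content_W.
move: eW; rewrite /content_W /content /=; case: ifP => [hb0 e|]; last by [].
move: hU; rewrite /Uw (seg_split _ _ (m := c0)); last first.
  by move: hb0; rewrite /in_box /= => /andP[-> _]; rewrite leqnSn.
rewrite seg1 e oddd2 catA unb_cat /=.
by rewrite /unprimed eqxx.
Qed.
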